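(* Let $p,q>0$ and $\alpha,\beta,\nu,\gamma\in\mathbb{R}$. Let $a,a^{\dagger},N,K$ be elements of an associative unital algebra satisfying $$aa^{\dagger}-p^{\nu}a^{\dagger}a=(1+2\gamma K)\,q^{\alpha N+\beta},\qquad [N,a^{\dagger}]=a^{\dagger},\qquad Ka^{\dagger}=-a^{\dagger}K,$$ where $q^{\alpha N+\beta}$ is an element such that, as a consequence of $[N,a^\dagger]=a^\dagger$, $q^{\alpha N+\beta}a^{\dagger}=a^{\dagger}q^{\alpha(N+1)+\beta}=q^{\alpha}\,a^{\dagger}q^{\alpha N+\beta}$. Then for every integer $n\geq 1$, $$a(a^{\dagger})^{n}-p^{n\nu}(a^{\dagger})^{n}a=[n;\alpha,\beta,\nu;\gamma K]\,(a^{\dagger})^{n-1}q^{\alpha N+\beta},$$ where $$[n;\alpha,\beta,\nu;\gamma K]=\begin{cases}\dfrac{p^{n\nu}-q^{n\alpha}}{p^{\nu}-q^{\alpha}}+2\gamma K\,\dfrac{q^{n\alpha}-(-1)^{n}p^{n\nu}}{p^{\nu}+q^{\alpha}}, & \text{if } p^{\nu}\neq q^{\alpha},\\[2ex] nq^{\alpha(n-1)}+2\gamma K\,q^{\alpha(n-1)}\,\dfrac{1-(-1)^{n}}{2}, & \text{if } p^{\nu}=q^{\alpha}.\end{cases}$$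
   Context: These are relations of the $(p,q;\alpha,\beta,\nu;\gamma)$-deformed oscillator algebra generated by $a,a^{\dagger},N,K$ with $aa^{\dagger}-p^{\nu}a^{\dagger}a=(1+2\gamma K)q^{\alpha N+\beta}$, $[N,a]=-a$, $[N,a^\dagger]=a^\dagger$, $Ka=-aK$, $Ka^\dagger=-a^\dagger K$, $[N,K]=0$. Scalars are identified with multiples of the unit. *)

(* Defs.v *)
From HB Require Import structures.
From mathcomp Require Import all_boot all_order all_algebra.
From mathcomp Require Import reals exp.
Set Implicit Arguments. Unset Strict Implicit. Unset Printing Implicit Defensive.
Import Order.TTheory GRing.Theory Num.Theory.
Local Open Scope ring_scope.

Definition deformed_bracket (R : realType) (A : algType R)
    (p q alpha nu gamma : R) (K : A) (n : nat) : A :=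
  if p `^ nu != q `^ alpha then
    ((p `^ (n%:R * nu) - q `^ (n%:R * alpha)) / (p `^ nu - q `^ alpha))%:A
    + (2 * gamma * ((q `^ (n%:R * alpha) - (-1) ^+ n * p `^ (n%:R * nu))
                     / (p `^ nu + q `^ alpha))) *: K
  else
    (n%:R * q `^ (alpha * (n%:R - 1)))%:A
    + (2 * gamma * q `^ (alpha * (n%:R - 1)) * ((1 - (-1) ^+ n) / 2)) *: K.

(* Main.v *)
Require Import Defs.
From HB Require Import structures.
From mathcomp Require Import all_boot all_order all_algebra.
From mathcomp Require Import reals exp.
From mathcomp Require Import ring.
Import Order.TTheory GRing.Theory Num.Theory.
Local Open Scope ring_scope.

Lemma key (R : realType) (A : algType R) (P r g : R) (a ad K Q : A)
  (c d : nat -> R) :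
  a * ad - P *: (ad * a) = (1 + (2 * g) *: K) * Q ->
  K * ad = - (ad * K) ->
  Q * ad = r *: (ad * Q) ->
  c 1%N = 1 -> d 1%N = 2 * g ->
  (forall n, c n.+2 = P ^+ n.+1 + r * c n.+1) ->
  (forall n, d n.+2 = 2 * g * (-1) ^+ n.+1 * P ^+ n.+1 + r * d n.+1) ->
  forall n, a * ad ^+ n.+1 - P ^+ n.+1 *: (ad ^+ n.+1 * a)
    = ((c n.+1)%:A + d n.+1 *: K) * ad ^+ n * Q.
Proof.
move=> Ha HK HQ c1 d1 cS dS.
have HKn : forall n, ad ^+ n * K = (-1) ^+ n *: (K * ad ^+ n).
  elim=> [|n IH]; first by rewrite !expr0 mul1r mulr1 scale1r.
  have HK' : ad * K = - (K * ad) by rewrite HK opprK.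
  rewrite exprS -mulrA IH -scalerAr (mulrA ad) HK' mulNr -mulrA.
  by rewrite [(-1) ^+ n.+1]exprS mulN1r scaleNr scalerN.
elim=> [|n IH].
  by rewrite !expr1 c1 d1 scale1r expr0 mulr1.
have Ha' : a * ad = P *: (ad * a) + Q + (2 * g) *: (K * Q).
  by rewrite -[a * ad](subrK (P *: (ad * a))) Ha mulrDl mul1r -scalerAl addrC addrA.
have IH' : a * ad ^+ n.+1 = P ^+ n.+1 *: (ad ^+ n.+1 * a)
   + c n.+1 *: (ad ^+ n * Q) + d n.+1 *: (K * ad ^+ n * Q).
  rewrite -[a * ad ^+ n.+1](subrK (P ^+ n.+1 *: (ad ^+ n.+1 * a))) IH.
  by rewrite !mulrDl mulr_algl -!scalerAl addrC !addrA.
set M1 := ad ^+ n.+2 * a; set M2 := ad ^+ n.+1 * Q; set M3 := K * ad ^+ n.+1 * Q.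
have E1 : a * ad ^+ n.+2 = (a * ad ^+ n.+1) * ad by rewrite exprSr mulrA.
have E2 : ad ^+ n.+1 * a * ad = P *: M1 + M2 + (2 * g * (-1) ^+ n.+1) *: M3.
  rewrite -mulrA Ha' !mulrDr -!scalerAr !mulrA HKn -scalerAl scalerA.
  by rewrite -exprSr.
have E3 : ad ^+ n * Q * ad = r *: M2.
  by rewrite -mulrA HQ -scalerAr mulrA -exprSr.
have E4 : K * ad ^+ n * Q * ad = r *: M3.
  by rewrite -!mulrA HQ -!scalerAr (mulrA (ad ^+ n)) -exprSr !mulrA.
rewrite E1 IH' !mulrDl -!scalerAl E2 E3 E4 mul1r -/M2 -/M3.
rewrite cS dS !scalerDr !scalerA !scalerDl -exprSr (mulrC (c n.+1) r).
rewrite (mulrC (d n.+1) r) (mulrC (P ^+ n.+1)).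
rewrite [LHS]addrC !addrA addNr add0r.
set u := P ^+ n.+1 *: M2; set v := (2 * g * _ * _) *: M3; set w := (r * c n.+1) *: M2.
by rewrite -[u + v + w]addrA [v + w]addrC addrA.
Qed.

Theorem proposition3 (R : realType) (A : algType R)
    (p q alpha beta nu gamma : R) (a ad N K Q : A) :
  0 < p -> 0 < q ->
  a * ad - p `^ nu *: (ad * a) = (1 + (2 * gamma) *: K) * Q ->
  N * ad - ad * N = ad ->
  K * ad = - (ad * K) ->
  Q * ad = q `^ alpha *: (ad * Q) ->
  forall n : nat, (1 <= n)%N ->
    a * ad ^+ n - p `^ (n%:R * nu) *: (ad ^+ n * a)
    = deformed_bracket p q alpha nu gamma K n * ad ^+ n.-1 * Q.
Proof.
move=> p0 q0 Ha _ HK HQ [//|m] _.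
set P := p `^ nu; set r := q `^ alpha.
have P0 : 0 < P by apply: powR_gt0.
have r0 : 0 < r by apply: powR_gt0.
have Pn : forall k : nat, p `^ (k%:R * nu) = P ^+ k.
  by move=> k; rewrite mulrC powRrM powR_mulrn // ltW.
have rn : forall k : nat, q `^ (k%:R * alpha) = r ^+ k.
  by move=> k; rewrite mulrC powRrM powR_mulrn // ltW.
have rn' : q `^ (alpha * (m.+1%:R - 1)) = r ^+ m.
  by rewrite -natr1 addrK mulrC rn.
rewrite Pn /deformed_bracket Pn rn rn' -/P -/r /=.
have Pr0 : P + r != 0 by rewrite gt_eqF // addr_gt0.
case: eqP => [EPr|NPr] /=.
- rewrite -EPr in rn' *.
  rewrite (@key R A P P gamma a ad K Q
     (fun n => n%:R * P ^+ n.-1)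
     (fun n => 2 * gamma * P ^+ n.-1 * ((1 - (-1) ^+ n) / 2))) //=.
  + by rewrite HQ -/r -EPr.
  + by rewrite mul1r expr0.
  + by rewrite expr0 mulr1 expr1; field.
  + by move=> k; rewrite -[(k.+2)%:R]natr1 -[(k.+1)%:R]natr1 exprS; ring.
  + by move=> k; rewrite !exprS; field.
- have Hd : P - r != 0 by rewrite subr_eq0; apply/eqP.
  rewrite (@key R A P r gamma a ad K Q
     (fun n => (P ^+ n - r ^+ n) / (P - r))
     (fun n => 2 * gamma * ((r ^+ n - (-1) ^+ n * P ^+ n) / (P + r)))) //=.
  + by rewrite !expr1 divff.
  + by rewrite !expr1; field.
  + by move=> k; rewrite !exprS; field.
  + by move=> k; rewrite !exprS; field.
Qed.
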